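(* If a Banach space $Z$ admits a coarse embedding into $L_2$, then $Z$ (with its norm metric) is $\Lambda$-nontrivial.
   Context: A map $f:Z\to L_2$ is a coarse embedding if there are non-decreasing $\alpha,\beta:[0,\infty)\to[0,\infty)$ with $\beta(t)\to\infty$ and $\beta(\|x-y\|)\le\|f(x)-f(y)\|_2\le\alpha(\|x-y\|)$ for all $x,y$. A map $f:X\to L_2$ is $\tau$-thresholding if $d(x,y)\ge\tau$ implies $\|f(x)-f(y)\|_2\ge\tau$. Define $\Lambda_\tau(X,\varepsilon)=\inf\big\{\sup_{x,y\in X,\ d(x,y)\ge\varepsilon\tau}\frac{\varepsilon\|f(x)-f(y)\|_2}{d(x,y)}: f:X\to L_2\text{ is }\tau\text{-thresholding}\big\}$ and $\Lambda(X,\varepsilon)=\sup_{\tau>0}\Lambda_\tau(X,\varepsilon)$. $(X,d)$ is $\Lambda$-nontrivial if $\liminf_{\varepsilon\to0}\Lambda(X,\varepsilon)=0$. *)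

(* Defs.v *)
From Stdlib Require Import Reals Lra ClassicalEpsilon.
Open Scope R_scope.

Record NormedSpace := {
  ns_car :> Type;
  ns_zero : ns_car;
  ns_add : ns_car -> ns_car -> ns_car;
  ns_opp : ns_car -> ns_car;
  ns_scal : R -> ns_car -> ns_car;
  ns_norm : ns_car -> R;
  ns_addA : forall x y z, ns_add x (ns_add y z) = ns_add (ns_add x y) z;
  ns_addC : forall x y, ns_add x y = ns_add y x;
  ns_add0 : forall x, ns_add x ns_zero = x;
  ns_addN : forall x, ns_add x (ns_opp x) = ns_zero;
  ns_scal1 : forall x, ns_scal 1 x = x;
  ns_scalA : forall a b x, ns_scal a (ns_scal b x) = ns_scal (a * b) x;
  ns_scalDr : forall a x y, ns_scal a (ns_add x y) = ns_add (ns_scal a x) (ns_scal a y);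
  ns_scalDl : forall a b x, ns_scal (a + b) x = ns_add (ns_scal a x) (ns_scal b x);
  ns_norm_ge0 : forall x, 0 <= ns_norm x;
  ns_norm_eq0 : forall x, ns_norm x = 0 -> x = ns_zero;
  ns_normZ : forall a x, ns_norm (ns_scal a x) = Rabs a * ns_norm x;
  ns_normD : forall x y, ns_norm (ns_add x y) <= ns_norm x + ns_norm y
}.

Definition ns_dist (Z : NormedSpace) (x y : Z) : R :=
  ns_norm Z (ns_add Z x (ns_opp Z y)).

Definition is_Banach (Z : NormedSpace) : Prop :=
  forall u : nat -> Z,
    (forall eps, 0 < eps -> exists N, forall m n, (N <= m)%nat -> (N <= n)%nat ->
        ns_dist Z (u m) (u n) < eps) ->
    exists l : Z, forall eps, 0 < eps -> exists N, forall n, (N <= n)%nat ->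
        ns_dist Z (u n) l < eps.

(* ---------- The Hilbert space L_2 (realised as l_2 = L_2[0,1] up to isometry) ---------- *)
Definition sq_summable (a : nat -> R) : Prop :=
  exists s, infinite_sum (fun n => (a n) ^ 2) s.

Definition L2 : Type := { a : nat -> R | sq_summable a }.

(* sum of squares of a square-summable sequence (chosen by epsilon; it is the
   unique limit whenever the series converges, e.g. for differences of L2 elements) *)
Definition sum_sq (a : nat -> R) : R :=
  epsilon (inhabits 0) (fun s => infinite_sum (fun n => (a n) ^ 2) s).

Definition L2_dist (u v : L2) : R :=
  sqrt (sum_sq (fun n => proj1_sig u n - proj1_sig v n)).

Definition nondecreasing_on_nonneg (g : R -> R) : Prop :=
  forall s t, 0 <= s -> s <= t -> g s <= g t.

Definition coarse_embedding {X : Type} (d : X -> X -> R) (f : X -> L2) : Prop :=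
  exists alpha beta : R -> R,
    nondecreasing_on_nonneg alpha /\ nondecreasing_on_nonneg beta /\
    (forall t, 0 <= t -> 0 <= alpha t) /\ (forall t, 0 <= t -> 0 <= beta t) /\
    (forall M, exists T, forall t, T <= t -> M <= beta t) /\
    (forall x y, beta (d x y) <= L2_dist (f x) (f y) /\
                 L2_dist (f x) (f y) <= alpha (d x y)).

Definition thresholding {X : Type} (d : X -> X -> R) (tau : R) (f : X -> L2) : Prop :=
  forall x y, tau <= d x y -> tau <= L2_dist (f x) (f y).

(* Lambda_tau(X,eps) <= c, i.e.
   inf_{f tau-thresholding} sup_{d(x,y) >= eps*tau} eps*||f x - f y||/d(x,y) <= c *)
Definition Lambda_tau_le {X : Type} (d : X -> X -> R) (eps tau c : R) : Prop :=
  forall eta, 0 < eta ->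
    exists f : X -> L2, thresholding d tau f /\
      forall x y, eps * tau <= d x y ->
        eps * L2_dist (f x) (f y) / d x y <= c + eta.

(* Lambda(X,eps) = sup_{tau>0} Lambda_tau(X,eps) <= c *)
Definition Lambda_le {X : Type} (d : X -> X -> R) (eps c : R) : Prop :=
  forall tau, 0 < tau -> Lambda_tau_le d eps tau c.

(* liminf_{eps -> 0+} Lambda(X,eps) = 0  (Lambda >= 0, so this means:
   for every delta > 0 and eps0 > 0 there is eps in (0,eps0) with Lambda(X,eps) < delta) *)
Definition Lambda_nontrivial {X : Type} (d : X -> X -> R) : Prop :=
  forall delta eps0, 0 < delta -> 0 < eps0 ->
    exists eps c, 0 < eps /\ eps < eps0 /\ c < delta /\ Lambda_le d eps c.

(* Main.v *)
Require Import Defs.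
From Stdlib Require Import Reals.
From Stdlib Require Import Lra Lia ClassicalEpsilon.
Open Scope R_scope.

Lemma sum_lin (a b : nat -> R) p q N :
  sum_f_R0 (fun n => p * a n + q * b n) N = p * sum_f_R0 a N + q * sum_f_R0 b N.
Proof. induction N; simpl; [ring | rewrite IHN; ring]. Qed.

Lemma cv_const (c : R) : Un_cv (fun _ => c) c.
Proof. intros e He; exists 0%nat; intros; unfold R_dist; rewrite Rminus_diag, Rabs_R0; lra. Qed.

Lemma isum_lin (a b : nat -> R) la lb p q :
  infinite_sum a la -> infinite_sum b lb ->
  infinite_sum (fun n => p * a n + q * b n) (p * la + q * lb).
Proof.
  intros Ha Hb.
  assert (H : Un_cv (fun N => p * sum_f_R0 a N + q * sum_f_R0 b N) (p * la + q * lb)).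
  { apply CV_plus; apply CV_mult; try apply cv_const; assumption. }
  intros e He; destruct (H e He) as [N HN]; exists N; intros n Hn.
  rewrite sum_lin; apply HN; exact Hn.
Qed.

Lemma isum_le (a b : nat -> R) la lb :
  (forall n, a n <= b n) -> infinite_sum a la -> infinite_sum b lb -> la <= lb.
Proof.
  intros H Ha Hb. apply (@Rle_cv_lim (sum_f_R0 a) (sum_f_R0 b) la lb); auto.
  intro N; apply sum_Rle; auto.
Qed.

Lemma isum_ge0 (a : nat -> R) la : (forall n, 0 <= a n) -> infinite_sum a la -> 0 <= la.
Proof.
  intros H Ha. apply (isum_le (fun _ => 0) a 0 la); auto.
  intros e He; exists 0%nat; intros n _. replace (sum_f_R0 (fun _ => 0) n) with 0.
  unfold R_dist; rewrite Rminus_diag, Rabs_R0; lra.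
  induction n; simpl; [ring| rewrite <- IHn; ring].
Qed.

Definition S2 (u v : L2) : R := sum_sq (fun n => proj1_sig u n - proj1_sig v n).

Lemma diff_summable (u v : L2) :
  exists s, infinite_sum (fun n => (proj1_sig u n - proj1_sig v n) ^ 2) s.
Proof.
  destruct u as [a [sa Ha]], v as [b [sb Hb]]; simpl.
  pose proof (isum_lin _ _ _ _ 2 2 Ha Hb) as Hab.
  destruct (Rseries_CV_comp (fun n => (a n - b n) ^ 2)
             (fun n => 2 * a n ^ 2 + 2 * b n ^ 2)) as [l Hl].
  - intro n; split; [apply pow2_ge_0|]. pose proof (pow2_ge_0 (a n + b n)). simpl in *; nra.
  - exists (2 * sa + 2 * sb); exact Hab.
  - exists l; exact Hl.
Qed.

Lemma S2_spec (u v : L2) :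
  infinite_sum (fun n => (proj1_sig u n - proj1_sig v n) ^ 2) (S2 u v).
Proof.
  unfold S2, sum_sq. apply epsilon_spec. apply diff_summable.
Qed.

Lemma S2_ge0 u v : 0 <= S2 u v.
Proof. apply (isum_ge0 _ _ (fun n => pow2_ge_0 _) (S2_spec u v)). Qed.

Lemma L2_dist_sq u v : L2_dist u v ^ 2 = S2 u v.
Proof. unfold L2_dist. fold (S2 u v). simpl. rewrite Rmult_1_r. apply sqrt_sqrt, S2_ge0. Qed.

Lemma L2_dist_ge0 u v : 0 <= L2_dist u v.
Proof. apply sqrt_pos. Qed.

Lemma S2_tri u v w : S2 u w <= 2 * S2 u v + 2 * S2 v w.
Proof.
  refine (isum_le _ _ _ _ _ (S2_spec u w) (isum_lin _ _ _ _ 2 2 (S2_spec u v) (S2_spec v w))).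
  intro n; simpl. pose proof (pow2_ge_0 (proj1_sig u n + proj1_sig w n - 2 * proj1_sig v n)). simpl in *; nra.
Qed.

Lemma smul_summable (s : R) (u : L2) : sq_summable (fun n => s * proj1_sig u n).
Proof.
  destruct u as [a [sa Ha]]; simpl. exists (s ^ 2 * sa + 0 * sa).
  pose proof (isum_lin _ _ _ _ (s^2) 0 Ha Ha) as H.
  intros e He; destruct (H e He) as [N HN]; exists N; intros n Hn.
  replace (sum_f_R0 (fun n0 : nat => (s * a n0) ^ 2) n) with
    (sum_f_R0 (fun n0 : nat => s ^ 2 * a n0 ^ 2 + 0 * a n0 ^ 2) n).
  apply HN; auto.
  apply sum_eq; intros; ring.
Qed.

Definition smul (s : R) (u : L2) : L2 := exist _ _ (smul_summable s u).

Lemma S2_smul s u v : S2 (smul s u) (smul s v) = s ^ 2 * S2 u v.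
Proof.
  apply (uniqueness_sum (fun n => (proj1_sig (smul s u) n - proj1_sig (smul s v) n) ^ 2)).
  apply S2_spec.
  pose proof (isum_lin _ _ _ _ (s^2) 0 (S2_spec u v) (S2_spec u v)) as H.
  rewrite Rmult_0_l, Rplus_0_r in H.
  intros e He; destruct (H e He) as [N HN]; exists N; intros n Hn.
  erewrite sum_eq. apply (HN n Hn). intros; simpl; ring.
Qed.

Lemma L2_dist_smul s u v : 0 <= s -> L2_dist (smul s u) (smul s v) = s * L2_dist u v.
Proof.
  intros Hs. unfold L2_dist. fold (S2 (smul s u) (smul s v)). fold (S2 u v).
  rewrite S2_smul. rewrite sqrt_mult_alt by nra. f_equal. simpl. rewrite Rmult_1_r.
  apply sqrt_square; auto.
Qed.

Section NS.
Variable Z : NormedSpace.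
Local Notation add := (ns_add Z).
Local Notation opp := (ns_opp Z).
Local Notation scal := (ns_scal Z).
Local Notation z0 := (ns_zero Z).

Lemma add0l x : add z0 x = x.
Proof. rewrite ns_addC; apply ns_add0. Qed.

Lemma add_cancel x y : add x y = x -> y = z0.
Proof.
  intro H. assert (H2 : add (opp x) (add x y) = add (opp x) x) by (rewrite H; auto).
  rewrite ns_addA, (ns_addC Z (opp x) x), ns_addN, add0l in H2. exact H2.
Qed.

Lemma scal0l v : scal 0 v = z0.
Proof.
  apply (add_cancel (scal 0 v)). rewrite <- ns_scalDl. f_equal. ring.
Qed.

Lemma opp_scal v : opp v = scal (-1) v.
Proof.
  assert (H : add v (scal (-1) v) = z0).
  { rewrite <- (ns_scal1 Z v) at 1. rewrite <- ns_scalDl. replace (1 + -1) with 0 by ring.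
    apply scal0l. }
  rewrite <- (ns_add0 Z (opp v)), <- H, ns_addA, (ns_addC Z (opp v) v), ns_addN, add0l.
  reflexivity.
Qed.

Lemma dist_scal l x y : 0 <= l -> ns_dist Z (scal l x) (scal l y) = l * ns_dist Z x y.
Proof.
  intro Hl. unfold ns_dist. rewrite !opp_scal, ns_scalA.
  replace (-1 * l) with (l * -1) by ring. rewrite <- ns_scalA, <- ns_scalDr, ns_normZ.
  rewrite Rabs_pos_eq; auto.
Qed.

Lemma dist_mid1 x y :
  ns_dist Z x (scal (/2) (add x y)) = /2 * ns_dist Z x y.
Proof.
  unfold ns_dist. rewrite !opp_scal.
  replace (add x (scal (-1) (scal (/ 2) (add x y)))) with
      (scal (/2) (add x (scal (-1) y))).
  rewrite ns_normZ, Rabs_pos_eq; lra.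
  rewrite ns_scalA, !ns_scalDr, ns_scalA, ns_addA.
  f_equal. rewrite <- (ns_scal1 Z x) at 2. rewrite <- ns_scalDl. f_equal. lra.
  f_equal. lra.
Qed.

Lemma dist_mid2 x y :
  ns_dist Z (scal (/2) (add x y)) y = /2 * ns_dist Z x y.
Proof.
  unfold ns_dist. rewrite !opp_scal.
  replace (add (scal (/ 2) (add x y)) (scal (-1) y)) with
      (scal (/2) (add x (scal (-1) y))).
  rewrite ns_normZ, Rabs_pos_eq; lra.
  rewrite !ns_scalDr, ns_scalA, <- ns_addA. f_equal.
  rewrite <- ns_scalDl. f_equal. lra.
Qed.

Lemma dist_ge0 x y : 0 <= ns_dist Z x y.
Proof. apply ns_norm_ge0. Qed.
End NS.

Lemma INR_le_pow2 n : INR n <= 2 ^ n.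
Proof.
  induction n. simpl; lra. rewrite S_INR. simpl.
  assert (1 <= 2 ^ n) by (apply pow_R1_Rle; lra). lra.
Qed.

Lemma growth (Z : NormedSpace) (f : Z -> L2) (alpha : R -> R) :
  nondecreasing_on_nonneg alpha ->
  (forall x y, L2_dist (f x) (f y) <= alpha (ns_dist Z x y)) ->
  0 <= alpha 1 ->
  forall x y, L2_dist (f x) (f y) <= alpha 1 * (1 + 2 * ns_dist Z x y).
Proof.
  intros Hmon Hup HA.
  set (A := alpha 1) in *.
  assert (Hbase : forall x y, ns_dist Z x y <= 1 -> L2_dist (f x) (f y) <= A).
  { intros x y H. eapply Rle_trans; [apply Hup|]. apply Hmon; auto. apply dist_ge0. }
  assert (Hind : forall m x y, ns_dist Z x y <= 2 ^ m ->
             S2 (f x) (f y) <= A ^ 2 * Rmax 1 (4 * ns_dist Z x y ^ 2)).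
  { induction m; intros x y Hd.
    - rewrite <- L2_dist_sq. simpl in Hd.
      pose proof (Hbase x y Hd). pose proof (L2_dist_ge0 (f x) (f y)).
      pose proof (Rmax_l 1 (4 * ns_dist Z x y ^ 2)). nra.
    - destruct (Rle_lt_dec (ns_dist Z x y) 1) as [H1|H1].
      + rewrite <- L2_dist_sq.
        pose proof (Hbase x y H1). pose proof (L2_dist_ge0 (f x) (f y)).
        pose proof (Rmax_l 1 (4 * ns_dist Z x y ^ 2)). nra.
      + set (zm := ns_scal Z (/2) (ns_add Z x y)).
        pose proof (dist_mid1 Z x y) as E1. pose proof (dist_mid2 Z x y) as E2.
        fold zm in E1, E2. simpl in Hd.
        assert (Ha : S2 (f x) (f zm) <= A ^ 2 * Rmax 1 (4 * ns_dist Z x zm ^ 2))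
          by (apply IHm; lra).
        assert (Hb : S2 (f zm) (f y) <= A ^ 2 * Rmax 1 (4 * ns_dist Z zm y ^ 2))
          by (apply IHm; lra).
        rewrite E1 in Ha. rewrite E2 in Hb.
        rewrite Rmax_right in Ha by nra. rewrite Rmax_right in Hb by nra.
        rewrite Rmax_right by nra.
        pose proof (S2_tri (f x) (f zm) (f y)). nra. }
  intros x y.
  destruct (INR_unbounded (ns_dist Z x y)) as [n Hn].
  pose proof (INR_le_pow2 n).
  pose proof (Hind n x y ltac:(lra)) as Hq.
  rewrite <- L2_dist_sq in Hq.
  pose proof (dist_ge0 Z x y). pose proof (L2_dist_ge0 (f x) (f y)).
  assert (Hm : Rmax 1 (4 * ns_dist Z x y ^ 2) <= (1 + 2 * ns_dist Z x y) ^ 2).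
  { apply Rmax_lub; nra. }
  assert (L2_dist (f x) (f y) ^ 2 <= (A * (1 + 2 * ns_dist Z x y)) ^ 2).
  { assert (0 <= A ^ 2) by nra. nra. }
  set (L := L2_dist (f x) (f y)) in *. set (B := A * (1 + 2 * ns_dist Z x y)) in *.
  assert (0 <= B) by (unfold B; nra).
  destruct (Rle_lt_dec L B); auto. simpl in *; nra.
Qed.

Theorem lemma5p6 (Z : NormedSpace) :
  is_Banach Z ->
  (exists f : Z -> L2, coarse_embedding (ns_dist Z) f) ->
  Lambda_nontrivial (ns_dist Z).
Proof.
  intros _ [f [alpha [beta [Ha [Hb [Ha0 [Hb0 [Hinf Hab]]]]]]]].
  intros delta eps0 Hd He.
  set (A := alpha 1).
  assert (HA : 0 <= A) by (apply Ha0; lra).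
  assert (Hgr := growth Z f alpha Ha (fun x y => proj2 (Hab x y)) HA). fold A in Hgr.
  set (M := 6 * (A + 1) / delta).
  assert (HM : 0 < M) by (unfold M; apply Rdiv_lt_0_compat; lra).
  destruct (Hinf M) as [T HT].
  set (R := Rmax (Rmax T 1) (2 / eps0)).
  assert (HR1 : 1 <= R) by (unfold R; eapply Rle_trans; [apply Rmax_r|apply Rmax_l]).
  assert (HRT : T <= R) by (unfold R; eapply Rle_trans; [apply Rmax_l|apply Rmax_l]).
  assert (HRe : 2 / eps0 <= R) by (unfold R; apply Rmax_r).
  set (b := beta R).
  assert (HbM : M <= b) by (apply HT; auto).
  assert (Hb0' : 0 < b) by lra.
  exists (/ R), (3 * A / b). split; [|split; [|split]].
  - apply Rinv_0_lt_compat; lra.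
  - apply (Rmult_lt_reg_l R); [lra|]. rewrite Rinv_r by lra.
    assert (2 <= R * eps0).
    { apply (Rmult_le_reg_r (/ eps0)). apply Rinv_0_lt_compat; lra.
      rewrite Rmult_assoc, Rinv_r, Rmult_1_r by lra. exact HRe. }
    nra.
  - apply Rle_lt_trans with (3 * A / M).
    + unfold Rdiv. apply Rmult_le_compat_l; [lra|]. apply Rinv_le_contravar; lra.
    + unfold M. apply (Rmult_lt_reg_r (6 * (A + 1) / delta)); [exact HM|].
      replace (3 * A / (6 * (A + 1) / delta) * (6 * (A + 1) / delta)) with (3 * A)
        by (field; lra).
      replace (delta * (6 * (A + 1) / delta)) with (6 * (A + 1)) by (field; lra).
      lra.
  - intros tau Htau eta Heta.
    assert (Hs : 0 <= tau / b) by (apply Rlt_le, Rdiv_lt_0_compat; lra).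
    assert (Hl : 0 <= R / tau) by (apply Rlt_le, Rdiv_lt_0_compat; lra).
    exists (fun x => smul (tau / b) (f (ns_scal Z (R / tau) x))). split.
    + intros x y Hxy. rewrite L2_dist_smul by exact Hs.
      assert (Hge : b <= L2_dist (f (ns_scal Z (R / tau) x)) (f (ns_scal Z (R / tau) y))).
      { eapply Rle_trans; [|apply (proj1 (Hab _ _))]. apply Hb; [lra|].
        rewrite dist_scal by exact Hl.
        apply (Rmult_le_reg_l tau); [lra|].
        replace (tau * (R / tau * ns_dist Z x y)) with (R * ns_dist Z x y) by (field; lra).
        nra. }
      replace tau with (tau / b * b) at 1 by (field; lra).
      apply Rmult_le_compat_l; auto.
    + intros x y Hxy. set (t := ns_dist Z x y) in *.
      assert (Ht : 0 < t).
      { eapply Rlt_le_trans; [|exact Hxy]. apply Rmult_lt_0_compat; auto.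
        apply Rinv_0_lt_compat; lra. }
      rewrite L2_dist_smul by exact Hs.
      set (L := L2_dist (f (ns_scal Z (R / tau) x)) (f (ns_scal Z (R / tau) y))).
      assert (HL : L <= A * (1 + 2 * (R / tau * t))).
      { unfold L. pose proof (dist_scal Z (R / tau) x y Hl) as E. fold t in E. rewrite <- E. apply Hgr. }
      assert (Htt : tau <= R * t).
      { apply (Rmult_le_reg_l (/ R)). apply Rinv_0_lt_compat; lra.
        rewrite <- Rmult_assoc, Rinv_l, Rmult_1_l by lra. exact Hxy. }
      assert (Hkey : tau * L <= 3 * A * R * t).
      { apply Rle_trans with (tau * (A * (1 + 2 * (R / tau * t)))).
        apply Rmult_le_compat_l; lra.
        replace (tau * (A * (1 + 2 * (R / tau * t)))) with (A * tau + 2 * A * R * t)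
          by (field; lra). nra. }
      replace (/ R * (tau / b * L) / t) with (tau * L / (R * b * t)) by (field; lra).
      apply Rle_trans with (3 * A * R * t / (R * b * t)).
      * unfold Rdiv. apply Rmult_le_compat_r; auto.
        apply Rlt_le, Rinv_0_lt_compat. apply Rmult_lt_0_compat; [|lra]. nra.
      * replace (3 * A * R * t / (R * b * t)) with (3 * A / b) by (field; lra). lra.
Qed.
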